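(* Let $R$ be a finite group and $S\subseteq R$. If $\mathrm{Cay}(R,S)$ is a nontrivial generalised wreath product with respect to subgroups $K$ and $H$, and $\mathbf{Z}(H)\cap K\not\leq \mathbf{Z}(R)$, then $\mathrm{Aut}(R)_S>1$.
   Context: $\mathbf{Z}(X)$ denotes the centre of a group $X$. $\mathrm{Aut}(R)_S$ is the group of automorphisms of $R$ fixing $S$ setwise. $\mathrm{Cay}(R,S)$ (vertex set $R$, arcs $r\to sr$ for $s\in S$) is a nontrivial generalised wreath product with respect to $K$ and $H$ if $1<K\trianglelefteq H<R$ and $K(S\setminus H)=S\setminus H=(S\setminus H)K$. *)

(* Defs.v *)
From mathcomp Require Import all_boot all_fingroup all_solvable.
Set Implicit Arguments. Unset Strict Implicit. Unset Printing Implicit Defensive.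
Local Open Scope group_scope.

(* Cay(R,S) is a nontrivial generalised wreath product w.r.t. K and H:
   1 < K <| H < R and K (S \ H) = S \ H = (S \ H) K. *)
Definition nontriv_gen_wreath (gT : finGroupType) (R : {set gT}) (S : {set gT})
    (K H : {set gT}) : Prop :=
  [/\ K :!=: 1, K <| H, H \proper R,
      K * (S :\: H) = S :\: H & (S :\: H) * K = S :\: H].

Definition AutS (gT : finGroupType) (R S : {set gT}) : {set {perm gT}} :=
  [set a in Aut R | [set a x | x in S] == S].

(* Main.v *)
Require Import Defs.
From mathcomp Require Import all_boot all_fingroup all_solvable.
Local Open Scope group_scope.

Theorem lemma4p7 (gT : finGroupType) (R K H : {group gT}) (S : {set gT}) :
  S \subset R ->
  nontriv_gen_wreath R S K H ->
  ~~ ('Z(H) :&: K \subset 'Z(R)) ->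
  (1 < #|AutS R S|)%N.
Proof.
move=> sSR [_ nKH pHR KS SK] /subsetPn [z /setIP [zZ zK] zNZ].
have sKH : K \subset H by case/andP: nKH.
have sHR : H \subset R by case/andP: pHR.
have zH : z \in H by rewrite (subsetP sKH).
have zR : z \in R by rewrite (subsetP sHR).
set a := conj_aut R z.
have aS : forall s, s \in S -> a s \in S.
  move=> s sS; rewrite /a conj_autE //; last exact: (subsetP sSR).
  case sH: (s \in H).
    have /centP cz : z \in 'C(H) by case/setIP: zZ.
    by rewrite /conjg -(cz s sH) mulKg.
  have sD : s \in S :\: H by rewrite inE sH sS.
  have : s ^ z \in S :\: H.
    rewrite conjgE.
    have h1 : z^-1 * s \in S :\: H by rewrite -KS; apply: mem_mulg; rewrite ?groupV.
    by rewrite -SK mulgA; apply: mem_mulg.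
  by case/setDP.
apply/card_gt1P; exists 1, a; split.
- rewrite inE group1 /=; apply/eqP/setP=> x.
  apply/imsetP/idP => [[y yS ->]|xS]; first by rewrite perm1.
  by exists x; rewrite ?perm1.
- rewrite inE Aut_aut /= eqEcard card_imset; last exact: perm_inj.
  rewrite leqnn andbT; apply/subsetP=> _ /imsetP [s sS ->]; exact: aS.
- apply/eqP=> a1; move/negP: zNZ; apply.
  have zC : z \in 'C(R).
    by rewrite -ker_conj_aut !inE (conjGid zR) subxx /=; apply/eqP; exact: (esym a1).
  by rewrite inE zR.
Qed.
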